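(* The space $X_{\mathrm{crs}}$ is contractible.
   Context: Let $X$ be the following 2-dimensional CW-complex. Its 0-cells are $e_n^0$, $n\ge 0$; the point $x=e_0^0$ is called the origin. For each $n\ge1$ there are two 1-cells $e_n^1, e_{-n}^1$, each joining $x$ to $e_n^0$, so that $e_0^0\cup e_n^0\cup e_n^1\cup e_{-n}^1$ is homeomorphic to a circle; for each $n\ge1$ a 2-cell $e_n^2$ is attached via a homeomorphism $\varphi_n:S^1\to e_0^0\cup e_n^0\cup e_n^1\cup e_{-n}^1$. Thus each closed 2-cell $\overline{e_n^2}$ is a closed disk having $x$ and $e_n^0$ on its boundary, and $X$ is a wedge at $x$ of countably many closed disks, carrying the CW (weak) topology. The coarser topology on the set $X$ consists of all subsets $U\subset X$ that are open in the CW-topology and either do not contain $x$, or contain $\overline{e_n^2}\smallsetminus e_n^0$ for all but finitely many $n\ge1$. The set $X$ with this coarser topology is denoted $X_{\mathrm{crs}}$. *)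

(* Defs.v *)
From Stdlib Require Import Reals.
Open Scope R_scope.

(* Each closed 2-cell is the closed unit disk D in R^2, attached so
   that its boundary point (-1,0) goes to the origin x = e_0^0 and (1,0) is the
   0-cell e_n^0; the upper / lower open semicircles are e_n^1, e_{-n}^1.
   The disk with index k : nat is the cell e_{k+1}^2 (so k ranges over all
   nat <-> n ranges over n >= 1). *)

Definition in_disk (p : R * R) : Prop := fst p ^ 2 + snd p ^ 2 <= 1.

Definition basept : R * R := (-1, 0).
Definition vertpt : R * R := (1, 0).

Definition Xcell : Type :=
  { q : nat * (R * R) | in_disk (snd q) /\ snd q <> basept }.

Definition X : Type := option Xcell.

Definition origin : X := None.

(* preimage of U ⊆ X under the characteristic map of the closed disk k *)
Definition preim (k : nat) (U : X -> Prop) (p : R * R) : Prop :=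
  in_disk p /\
  ((p = basept /\ U origin) \/
   (exists h : in_disk p /\ p <> basept, U (Some (exist _ (k, p) h)))).

Definition rel_open_disk (S : R * R -> Prop) : Prop :=
  forall p, S p -> exists eps, 0 < eps /\
    forall q, in_disk q ->
      (fst p - fst q) ^ 2 + (snd p - snd q) ^ 2 < eps ^ 2 -> S q.

Definition cw_open (U : X -> Prop) : Prop :=
  forall k, rel_open_disk (preim k U).

Definition crs_open (U : X -> Prop) : Prop :=
  cw_open U /\
  (~ U origin \/
   exists N : nat, forall k, (N <= k)%nat ->
     forall p, in_disk p -> p <> vertpt -> preim k U p).

(* Continuity of H : X_crs x [0,1] -> X_crs (product topology on X_crs x [0,1],
   H only considered for t in [0,1]). *)
Definition crs_homotopy_continuous (H : X -> R -> X) : Prop :=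
  forall U : X -> Prop, crs_open U ->
    forall a t, 0 <= t <= 1 -> U (H a t) ->
      exists V : X -> Prop, crs_open V /\ V a /\
        exists eps, 0 < eps /\
          forall b s, V b -> 0 <= s <= 1 -> Rabs (s - t) < eps -> U (H b s).

Definition crs_contractible : Prop :=
  exists (H : X -> R -> X) (c : X),
    crs_homotopy_continuous H /\
    (forall a, H a 0 = a) /\
    (forall a, H a 1 = c).

(* Main.v *)
Require Import Defs.
From Stdlib Require Import Reals Lra Psatz Classical ClassicalEpsilon ProofIrrelevance.
Open Scope R_scope.

Definition fh (p : R * R) (s : R) : R * R := ((1 - s) * fst p - s, (1 - s) * snd p).

Definition Bx (p q : R * R) (r : R) : Prop :=
  Rabs (fst p - fst q) < r /\ Rabs (snd p - snd q) < r.

Definition embed (k : nat) (q : R * R) : X :=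
  match excluded_middle_informative (in_disk q /\ q <> basept) with
  | left h => Some (exist _ (k, q) h)
  | right _ => None
  end.

Definition Hm (a : X) (t : R) : X :=
  match a with
  | None => None
  | Some c => embed (fst (proj1_sig c)) (fh (snd (proj1_sig c)) t)
  end.

Lemma box_open (S : R * R -> Prop) :
  (forall p, S p -> exists r, 0 < r /\ forall q, in_disk q -> Bx p q r -> S q) ->
  rel_open_disk S.
Proof.
  intros H p Sp. destruct (H p Sp) as [r [rpos Hr]]. exists r. split; auto.
  intros q dq Hq. apply Hr; auto.
  set (a := fst p - fst q) in *. set (b := snd p - snd q) in *.
  assert (a^2 < r^2) by nra. assert (b^2 < r^2) by nra.
  split; apply Rabs_def1.
  - destruct (Rlt_or_le a r); auto. nra.
  - destruct (Rlt_or_le (-r) a); auto. nra.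
  - destruct (Rlt_or_le b r); auto. nra.
  - destruct (Rlt_or_le (-r) b); auto. nra.
Qed.

Lemma open_box (S : R * R -> Prop) p :
  rel_open_disk S -> S p -> exists r, 0 < r /\ forall q, in_disk q -> Bx p q r -> S q.
Proof.
  intros H Sp. destruct (H p Sp) as [e [epos He]]. exists (e/2). split; [lra|].
  intros q dq [B1 B2]. apply He; auto.
  apply Rabs_def2 in B1. apply Rabs_def2 in B2.
  set (a := fst p - fst q) in *. set (b := snd p - snd q) in *.
  assert (a^2 < (e/2)^2) by nra. assert (b^2 < (e/2)^2) by nra. nra.
Qed.

Lemma neq_box q c : q <> c -> exists r, 0 < r /\ forall q', Bx q q' r -> q' <> c.
Proof.
  intros nq. destruct q as [q1 q2]; destruct c as [c1 c2].
  destruct (Req_dec q1 c1) as [e|e].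
  - assert (q2 <> c2) by (intro; apply nq; subst; reflexivity).
    exists (Rabs (q2 - c2)). split. apply Rabs_pos_lt. lra.
    intros q' [_ B2] E. subst q'. simpl in B2. lra.
  - exists (Rabs (q1 - c1)). split. apply Rabs_pos_lt. lra.
    intros q' [B1 _] E. subst q'. simpl in B1. lra.
Qed.

Lemma box_sub p q d : Bx p q d -> exists r, 0 < r /\ forall q', Bx q q' r -> Bx p q' d.
Proof.
  intros [B1 B2].
  exists (Rmin (d - Rabs (fst p - fst q)) (d - Rabs (snd p - snd q))).
  split. apply Rmin_glb_lt; lra.
  intros q' [C1 C2].
  pose proof (Rmin_l (d - Rabs (fst p - fst q)) (d - Rabs (snd p - snd q))).
  pose proof (Rmin_r (d - Rabs (fst p - fst q)) (d - Rabs (snd p - snd q))).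
  pose proof (Rabs_triang (fst p - fst q) (fst q - fst q')).
  pose proof (Rabs_triang (snd p - snd q) (snd q - snd q')).
  replace (fst p - fst q + (fst q - fst q')) with (fst p - fst q') in * by ring.
  replace (snd p - snd q + (snd q - snd q')) with (snd p - snd q') in * by ring.
  split; lra.
Qed.

Lemma Bx_mono p q r r' : Bx p q r -> r <= r' -> Bx p q r'.
Proof. intros [A B] h; split; lra. Qed.

Lemma Bx_refl p r : 0 < r -> Bx p p r.
Proof. intros h; split; rewrite Rminus_diag, Rabs_R0; lra. Qed.

Lemma disk_bounds p : in_disk p -> -1 <= fst p <= 1 /\ -1 <= snd p <= 1.
Proof. unfold in_disk. intros h. split; split; nra. Qed.

Lemma f_disk q s : in_disk q -> 0 <= s <= 1 -> in_disk (fh q s).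
Proof.
  intros h hs. pose proof (disk_bounds q h). unfold in_disk in *. unfold fh; simpl.
  destruct q as [q1 q2]; simpl in *.
  assert (((1 - s) * q1 - s) ^ 2 + ((1 - s) * q2) ^ 2 =
          (1-s)^2 * (q1^2 + q2^2) - 2*s*(1-s)*q1 + s^2) by ring.
  assert (0 <= (1-s)^2) by (apply pow2_ge_0).
  assert ((1-s)^2 * (q1^2 + q2^2) <= (1-s)^2 * 1) by (apply Rmult_le_compat_l; lra).
  assert (0 <= 2*s*(1-s)) by nra.
  assert (- 2*s*(1-s)*q1 <= 2*s*(1-s)) by nra.
  nra.
Qed.

Lemma f_nvert q s : in_disk q -> q <> vertpt -> 0 <= s <= 1 -> fh q s <> vertpt.
Proof.
  intros h nq hs E. pose proof (disk_bounds q h) as [[a b] _].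
  destruct q as [q1 q2]; unfold fh, vertpt in *; simpl in *.
  injection E as E1 E2.
  destruct (Req_dec s 0) as [->|ns].
  - apply nq. f_equal; lra.
  - assert ((1-s)*q1 <= 1 - s) by nra. lra.
Qed.

Lemma embed_preim U k q : in_disk q -> U (embed k q) -> preim k U q.
Proof.
  intros dq HU. split; auto. unfold embed in HU.
  destruct (excluded_middle_informative _) as [h|h].
  - right. exists h. exact HU.
  - left. split; auto. apply NNPP. intro n. apply h; auto.
Qed.

Lemma preim_embed U k q : preim k U q -> U (embed k q).
Proof.
  intros [dq [[e Uo]|[h Uh]]]; unfold embed;
  destruct (excluded_middle_informative _) as [h'|h'].
  - exfalso. apply (proj2 h'). exact e.
  - exact Uo.
  - rewrite (proof_irrelevance _ h' h). exact Uh.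
  - exfalso. apply h'. exact h.
Qed.

Lemma preim_intro (W : X -> Prop) j q : in_disk q -> (q = basept -> W origin) ->
  (forall h, W (Some (exist _ (j, q) h))) -> preim j W q.
Proof.
  intros dq H1 H2. split; auto.
  destruct (classic (q = basept)) as [e|e].
  - left; auto.
  - right. exists (conj dq e). apply H2.
Qed.

Lemma f_cont p q t s r0 : in_disk p -> 0 < r0 -> Bx p q (r0/2) ->
  Rabs (s - t) < r0/4 -> 0 <= s <= 1 -> 0 <= t <= 1 -> Bx (fh p t) (fh q s) r0.
Proof.
  intros dp r0p [B1 B2] Hst hs ht. pose proof (disk_bounds p dp) as [[a b] [c d]].
  apply Rabs_def2 in B1. apply Rabs_def2 in B2. apply Rabs_def2 in Hst.
  destruct p as [p1 p2]; destruct q as [q1 q2]; unfold Bx, fh; simpl in *.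
  replace ((1 - t) * p1 - t - ((1 - s) * q1 - s)) with
     ((1-s)*(p1-q1) + (s-t)*(p1+1)) by ring.
  replace ((1 - t) * p2 - (1 - s) * q2) with ((1-s)*(p2-q2) + (s-t)*p2) by ring.
  assert (-(r0/2) < (1-s)*(p1-q1) < r0/2) by (split; nra).
  assert (-(r0/2) < (1-s)*(p2-q2) < r0/2) by (split; nra).
  assert (-(r0/2) <= (s-t)*(p1+1) <= r0/2) by (split; nra).
  assert (-(r0/4) <= (s-t)*p2 <= r0/4) by (split; nra).
  split; apply Rabs_def1; lra.
Qed.

Lemma f_basept q s r : Bx basept q r -> 0 <= s <= 1 -> Bx basept (fh q s) r.
Proof.
  intros [B1 B2] hs. apply Rabs_def2 in B1. apply Rabs_def2 in B2.
  destruct q as [q1 q2]; unfold Bx, fh, basept in *; simpl in *.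
  split; apply Rabs_def1; nra.
Qed.

Lemma basept_disk : in_disk basept.
Proof. unfold in_disk, basept; simpl; lra. Qed.

Theorem proposition3p2 : crs_contractible.
Proof.
  exists Hm, None. split; [|split].
  - intros U [Ucw Uor] a t Ht HU. destruct a as [c|].
    + destruct c as [[k p] hp]. simpl in HU.
      assert (P : preim k U (fh p t)).
      { apply embed_preim; auto. apply f_disk; tauto. }
      destruct (open_box _ _ (Ucw k) P) as [r0 [r0pos Hr0]].
      exists (fun b => match b with None => False | Some c =>
                fst (proj1_sig c) = k /\ Bx p (snd (proj1_sig c)) (r0/2) end).
      split; [split|split].
      * intros j. apply box_open. intros q [dq [[e F]|[h Vq]]]; [contradiction|].
        simpl in Vq. destruct Vq as [ej Bq].
        destruct (neq_box q basept (proj2 h)) as [r1 [r1p H1]].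
        destruct (box_sub _ _ _ Bq) as [r2 [r2p H2]].
        exists (Rmin r1 r2). split. apply Rmin_glb_lt; auto.
        intros q' dq' Bq'. split; auto. right.
        assert (nq : q' <> basept) by (apply H1; eapply Bx_mono; [eauto|apply Rmin_l]).
        exists (conj dq' nq). simpl. split; auto.
        apply H2; eapply Bx_mono; [eauto|apply Rmin_r].
      * left. simpl. tauto.
      * simpl. split; auto. apply Bx_refl; lra.
      * exists (r0/4). split; [lra|].
        intros b s Vb Hs Hst. destruct b as [c|]; [|contradiction].
        destruct c as [[j q] hq]. simpl in Vb. destruct Vb as [ej Bq]. subst j.
        simpl. apply preim_embed. apply Hr0.
        apply f_disk; tauto.
        apply f_cont; tauto.
    + simpl in HU. destruct Uor as [nU|[N HN]]; [contradiction|].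
      exists (fun b => match b with None => True | Some c =>
        ((N <= fst (proj1_sig c))%nat /\ snd (proj1_sig c) <> vertpt) \/
        exists r, 0 < r /\ (forall q', in_disk q' -> Bx basept q' r ->
                   preim (fst (proj1_sig c)) U q') /\ Bx basept (snd (proj1_sig c)) r end).
      split; [split|split].
      * intros j. apply box_open. intros q [dq [[e _]|[h Vq]]].
        -- subst q.
           assert (Pb : preim j U basept) by (split; [apply basept_disk|left; auto]).
           destruct (open_box _ _ (Ucw j) Pb) as [r [rp Hr]].
           exists r. split; auto. intros q' dq' Bq'.
           apply preim_intro; [auto|intros; exact I|]. intros h'. simpl. right. exists r. auto.
        -- simpl in Vq. destruct Vq as [[Nj nv]|[r [rp [Hr Bq]]]].
           ++ destruct (neq_box q vertpt nv) as [r1 [r1p H1]].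
              exists r1. split; auto. intros q' dq' Bq'.
              apply preim_intro; [auto|intros; exact I|]. intros h'. simpl. left. auto.
           ++ destruct (box_sub _ _ _ Bq) as [r2 [r2p H2]].
              exists r2. split; auto. intros q' dq' Bq'.
              apply preim_intro; [auto|intros; exact I|]. intros h'. simpl. right. exists r. auto.
      * right. exists N. intros k Nk p dp np. apply preim_intro; [auto|intros; exact I|].
        intros h. simpl. left. auto.
      * exact I.
      * exists 1. split; [lra|]. intros b s Vb Hs _.
        destruct b as [c|]; [|exact HU].
        destruct c as [[j q] hq]. simpl in Vb. simpl. apply preim_embed.
        destruct Vb as [[Nj nv]|[r [rp [Hr Bq]]]].
        -- apply HN; auto. apply f_disk; tauto. apply f_nvert; tauto.
        -- apply Hr. apply f_disk; tauto. apply f_basept; auto.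
  - intros a. destruct a as [c|]; [|reflexivity].
    destruct c as [[k p] hp]. simpl.
    assert (E : fh p 0 = p) by (destruct p; unfold fh; simpl; f_equal; ring).
    rewrite E. unfold embed. destruct (excluded_middle_informative _) as [h|h].
    + rewrite (proof_irrelevance _ h hp). reflexivity.
    + contradiction.
  - intros a. destruct a as [c|]; [|reflexivity].
    destruct c as [[k p] hp]. simpl.
    assert (E : fh p 1 = basept) by (destruct p; unfold fh, basept; simpl; f_equal; ring).
    rewrite E. unfold embed. destruct (excluded_middle_informative _) as [h|h].
    + exfalso. apply (proj2 h). reflexivity.
    + reflexivity.
Qed.
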